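(* Let $f\in\mathcal{C}(2\pi)$ and $m,n\ge0$. Then $$E^\alpha_{mn}(f;[-\pi,\pi])\le\frac{1+|\alpha|_\infty(\|Id-L\|-1)}{1-|\alpha|_\infty}\,E_{mn}(f;[-\pi,\pi])+\frac{|\alpha|_\infty}{1-|\alpha|_\infty}\|Id-L\|\,\|f\|_\infty,$$ where $\|Id-L\|$ is the operator norm.
   Context: Let $I=[x_0,x_N]=[-\pi,\pi]$, $N\ge2$, $\Delta=\{x_0<x_1<\dots<x_N\}$, $I_i=[x_{i-1},x_i]$, and $L_i(x)=a_ix+b_i$ the affine map of $I$ onto $I_i$ with $L_i(x_0)=x_{i-1}$, $L_i(x_N)=x_i$; $\alpha\in(-1,1)^N$, $|\alpha|_\infty=\max_i|\alpha_i|$. For $f,b$ continuous with $b(x_0)=f(x_0)$, $b(x_N)=f(x_N)$, $f^\alpha_{\Delta,b}$ is the unique continuous $g$ with $g(x)=f(x)+\alpha_i(g-b)(L_i^{-1}(x))$ for $x\in I_i$. $L:\mathcal{C}(2\pi)\to\mathcal{C}(2\pi)$ is bounded linear with $(Lf)(x_0)=f(x_0)$, $(Lf)(x_N)=f(x_N)$, and $\mathcal{F}^\alpha_{\Delta,L}(f)=f^\alpha_{\Delta,Lf}$. $\mathcal{C}(2\pi)=\{f\in\mathcal{C}([-\pi,\pi]):f(-\pi)=f(\pi)\}$ with sup norm; $\mathfrak{T}_m$ = real trigonometric polynomials of degree $\le m$; $\mathfrak{R}_{mn}(2\pi)=\{p/q:p\in\mathfrak{T}_m,q\in\mathfrak{T}_n,q>0\text{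 on }[-\pi,\pi]\}$; $\mathfrak{R}^\alpha_{mn}(2\pi)=\mathcal{F}^\alpha_{\Delta,L}(\mathfrak{R}_{mn}(2\pi))$. $E^\alpha_{mn}(f;[-\pi,\pi])=\inf\{\|f-r^\alpha\|_\infty:r^\alpha\in\mathfrak{R}^\alpha_{mn}(2\pi)\}$ and $E_{mn}(f;[-\pi,\pi])=\inf\{\|f-r\|_\infty:r\in\mathfrak{R}_{mn}(2\pi)\}$. *)

(* Defs.v *)
From Stdlib Require Import Reals Lra Lia ClassicalEpsilon.
Open Scope R_scope.

Definition Rsup (E : R -> Prop) : R :=
  epsilon (inhabits 0) (fun l => is_lub E l).
Definition Rinf (E : R -> Prop) : R := - Rsup (fun y => E (- y)).

Definition inI (x : R) : Prop := -PI <= x <= PI.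

Definition supnorm (f : R -> R) : R :=
  Rsup (fun y => exists x, inI x /\ y = Rabs (f x)).

Definition cont_on (a b : R) (g : R -> R) : Prop :=
  forall x, a <= x <= b -> forall eps, 0 < eps ->
    exists delta, 0 < delta /\
      forall y, a <= y <= b -> Rabs (y - x) < delta -> Rabs (g y - g x) < eps.

Definition C2pi (f : R -> R) : Prop := cont_on (-PI) PI f /\ f (-PI) = f PI.

Fixpoint trig_sum (a b : nat -> R) (m : nat) (x : R) : R :=
  match m with
  | O => a O
  | S k => trig_sum a b k x + a (S k) * cos (INR (S k) * x)
                             + b (S k) * sin (INR (S k) * x)
  end.

Definition trig_poly (m : nat) (p : R -> R) : Prop :=
  exists a b : nat -> R, forall x, p x = trig_sum a b m x.

Definition rat_trig (m n : nat) (r : R -> R) : Prop :=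
  exists p q, trig_poly m p /\ trig_poly n q /\
    (forall x, inI x -> 0 < q x) /\ r = (fun x => p x / q x).

Definition partition (xs : nat -> R) (N : nat) : Prop :=
  (2 <= N)%nat /\ xs O = - PI /\ xs N = PI /\
  (forall i, (i < N)%nat -> xs i < xs (S i)).

(* L_i(x) = a_i x + b_i with L_i(-pi) = x_{i-1}, L_i(pi) = x_i *)
Definition La (xs : nat -> R) (i : nat) : R := (xs i - xs (i - 1)%nat) / (2 * PI).
Definition Lb (xs : nat -> R) (i : nat) : R := xs (i - 1)%nat + PI * La xs i.
Definition Linv (xs : nat -> R) (i : nat) (t : R) : R := (t - Lb xs i) / La xs i.

Definition is_fractal (xs : nat -> R) (N : nat) (alpha : nat -> R)
  (f b g : R -> R) : Prop :=
  cont_on (-PI) PI g /\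
  forall i, (1 <= i <= N)%nat -> forall t, xs (i - 1)%nat <= t <= xs i ->
    g t = f t + alpha i * (g (Linv xs i t) - b (Linv xs i t)).

Fixpoint alpha_max (alpha : nat -> R) (N : nat) : R :=
  match N with
  | O => 0
  | S k => Rmax (alpha_max alpha k) (Rabs (alpha (S k)))
  end.

(* admissible operator L : C(2pi) -> C(2pi), bounded linear, interpolating
   the endpoints; functions are identified when equal on [-pi,pi] *)
Definition admissible_L (L : (R -> R) -> (R -> R)) : Prop :=
  (forall f, C2pi f -> C2pi (L f)) /\
  (forall f g, (forall x, inI x -> f x = g x) ->
     forall x, inI x -> L f x = L g x) /\
  (forall f g c, C2pi f -> C2pi g ->
     forall x, inI x -> L (fun t => f t + c * g t) x = L f x + c * L g x) /\
  (exists M, forall f, C2pi f -> supnorm (L f) <= M * supnorm f) /\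
  (forall f, C2pi f -> L f (- PI) = f (- PI) /\ L f PI = f PI).

Definition opnorm_IdL (L : (R -> R) -> (R -> R)) : R :=
  Rsup (fun y => exists h, C2pi h /\ supnorm h <= 1 /\
                   y = supnorm (fun t => h t - L h t)).

Definition E_mn (m n : nat) (f : R -> R) : R :=
  Rinf (fun y => exists r, rat_trig m n r /\ y = supnorm (fun t => f t - r t)).

(* E^alpha_{mn}(f): inf over r^alpha = F^alpha_{Delta,L}(r), r in R_mn *)
Definition E_alpha_mn (xs : nat -> R) (N : nat) (alpha : nat -> R)
  (L : (R -> R) -> (R -> R)) (m n : nat) (f : R -> R) : R :=
  Rinf (fun y => exists r g, rat_trig m n r /\ is_fractal xs N alpha r (L r) g /\
                   y = supnorm (fun t => f t - g t)).

(* Main.v *)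
Require Import Defs.
From Stdlib Require Import Reals Lra Lia ClassicalEpsilon Classical.
From Coquelicot Require Import Coquelicot.
Open Scope R_scope.
Lemma Rsup_lub (E : R -> Prop) :
  (exists x, E x) -> (exists M, forall x, E x -> x <= M) -> is_lub E (Rsup E).
Proof.
  intros [x Ex] [M HM]. unfold Rsup. apply epsilon_spec.
  destruct (completeness E) as [l Hl]. exists M; exact HM. exists x; exact Ex.
  exists l; exact Hl.
Qed.

Lemma Rsup_ge (E : R -> Prop) x M : (forall y, E y -> y <= M) -> E x -> x <= Rsup E.
Proof. intros HM Ex. destruct (Rsup_lub E) as [H1 _]; eauto. Qed.

Lemma Rsup_le (E : R -> Prop) M : (exists x, E x) -> (forall y, E y -> y <= M) -> Rsup E <= M.
Proof. intros Hn HM. destruct (Rsup_lub E) as [_ H2]; eauto. Qed.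

Lemma Rinf_le (E : R -> Prop) x m : (forall y, E y -> m <= y) -> E x -> Rinf E <= x.
Proof.
  intros Hm Ex. unfold Rinf.
  assert (- x <= Rsup (fun y => E (- y))).
  { apply Rsup_ge with (M := - m). intros y Ey. specialize (Hm _ Ey). lra.
    now rewrite Ropp_involutive. }
  lra.
Qed.

Lemma Rinf_ge (E : R -> Prop) m : (exists x, E x) -> (forall y, E y -> m <= y) -> m <= Rinf E.
Proof.
  intros [x Ex] Hm. unfold Rinf.
  assert (Rsup (fun y => E (- y)) <= - m).
  { apply Rsup_le. exists (-x). now rewrite Ropp_involutive.
    intros y Ey. specialize (Hm _ Ey). lra. }
  lra.
Qed.

Lemma cpt_intro F x : (forall eps, 0 < eps -> exists d, 0 < d /\
   forall y, Rabs (y - x) < d -> Rabs (F y - F x) < eps) -> continuity_pt F x.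
Proof.
  intros H. unfold continuity_pt, continue_in, limit1_in, limit_in. simpl.
  unfold R_dist. intros eps Heps. destruct (H eps Heps) as [d [Hd Hy]].
  exists d; split; [lra|]. intros y [_ Hy2]. now apply Hy.
Qed.

Lemma cpt_elim F x : continuity_pt F x -> forall eps, 0 < eps -> exists d, 0 < d /\
   forall y, Rabs (y - x) < d -> Rabs (F y - F x) < eps.
Proof.
  intros H eps Heps. unfold continuity_pt, continue_in, limit1_in, limit_in in H. simpl in H.
  unfold R_dist in H. destruct (H eps Heps) as [d [Hd Hy]].
  exists d; split; [lra|]. intros y Hyd.
  destruct (Req_dec x y) as [<-|Hne].
  - unfold Rminus; rewrite Rplus_opp_r, Rabs_R0; lra.
  - apply Hy. split; [|exact Hyd]. split; [exact I| exact Hne].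
Qed.

Definition clamp (a b x : R) := Rmax a (Rmin x b).

Lemma clamp_in a b x : a <= b -> a <= clamp a b x <= b.
Proof. intros. unfold clamp, Rmax, Rmin. repeat destruct Rle_dec; lra. Qed.
Lemma clamp_id a b x : a <= x <= b -> clamp a b x = x.
Proof. intros. unfold clamp, Rmax, Rmin. repeat destruct Rle_dec; lra. Qed.
Lemma clamp_lip a b x y : a <= b -> Rabs (clamp a b y - clamp a b x) <= Rabs (y - x).
Proof. intros. unfold clamp, Rmax, Rmin. repeat destruct Rle_dec;
  repeat match goal with |- context [Rabs ?z] => destruct (Rcase_abs z) ; [rewrite (Rabs_left z) by lra | rewrite (Rabs_right z) by lra] end; lra. Qed.

Lemma cont_on_clamp a b g : a <= b -> cont_on a b g -> forall x, continuity_pt (fun y => g (clamp a b y)) x.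
Proof.
  intros Hab Hc x. apply cpt_intro. intros eps Heps.
  destruct (Hc (clamp a b x) (clamp_in a b x Hab) eps Heps) as [d [Hd Hy]].
  exists d; split; auto. intros y Hyx. apply Hy. now apply clamp_in.
  eapply Rle_lt_trans. apply clamp_lip; auto. auto.
Qed.

Lemma cont_on_of_pt a b g : (forall x, a <= x <= b -> continuity_pt g x) -> cont_on a b g.
Proof.
  intros H x Hx eps Heps. destruct (cpt_elim g x (H x Hx) eps Heps) as [d [Hd Hy]].
  exists d; split; auto.
Qed.

Lemma cont_on_ext a b g h : cont_on a b g -> (forall x, a <= x <= b -> g x = h x) -> cont_on a b h.
Proof.
  intros Hc He x Hx eps Heps. destruct (Hc x Hx eps Heps) as [d [Hd Hy]].
  exists d; split; auto. intros y Hy1 Hy2. rewrite <- !He; auto.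
Qed.

Lemma cont_on_of_clamp a b g : (forall x, continuity_pt (fun y => g (clamp a b y)) x) -> cont_on a b g.
Proof.
  intros H. apply cont_on_ext with (g := fun y => g (clamp a b y)).
  apply cont_on_of_pt; auto. intros; now rewrite clamp_id.
Qed.

Lemma cont_on_plus a b g h : a <= b -> cont_on a b g -> cont_on a b h -> cont_on a b (fun x => g x + h x).
Proof.
  intros Hab Hg Hh. apply cont_on_of_clamp. intros x.
  apply (continuity_pt_plus (fun y => g (clamp a b y)) (fun y => h (clamp a b y))); apply cont_on_clamp; auto.
Qed.

Lemma cont_on_minus a b g h : a <= b -> cont_on a b g -> cont_on a b h -> cont_on a b (fun x => g x - h x).
Proof.
  intros Hab Hg Hh. apply cont_on_of_clamp. intros x.
  apply (continuity_pt_minus (fun y => g (clamp a b y)) (fun y => h (clamp a b y))); apply cont_on_clamp; auto.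
Qed.

Lemma cont_on_scal a b g c : a <= b -> cont_on a b g -> cont_on a b (fun x => c * g x).
Proof.
  intros Hab Hg. apply cont_on_of_clamp. intros x.
  apply (continuity_pt_scal (fun y => g (clamp a b y))); apply cont_on_clamp; auto.
Qed.

Lemma cont_on_const a b c : cont_on a b (fun _ => c).
Proof. intros x Hx eps He. exists 1; split; [lra|]. intros. unfold Rminus; rewrite Rplus_opp_r, Rabs_R0; lra. Qed.

Lemma cont_on_bounded a b g : a <= b -> cont_on a b g -> exists B, forall x, a <= x <= b -> Rabs (g x) <= B.
Proof.
  intros Hab Hg.
  destruct (continuity_ab_maj (fun y => Rabs (g (clamp a b y))) a b Hab) as [Mx [HM _]].
  { intros c _. apply (continuity_pt_comp (fun y => g (clamp a b y)) Rabs).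
    apply cont_on_clamp; auto. apply Rcontinuity_abs. }
  exists (Rabs (g (clamp a b Mx))). intros x Hx. specialize (HM x Hx). simpl in HM.
  rewrite clamp_id in HM; auto.
Qed.

Lemma cont_on_glue a c b g : cont_on a c g -> cont_on c b g -> cont_on a b g.
Proof.
  intros H1 H2 x Hx eps Heps.
  destruct (Rtotal_order x c) as [Hlt|[Heq|Hgt]].
  - destruct (H1 x ltac:(lra) eps Heps) as [d [Hd Hy]].
    exists (Rmin d (c - x)). split. apply Rmin_pos; lra.
    intros y Hy1 Hy2. apply Hy.
    assert (Rabs (y - x) < c - x) by (eapply Rlt_le_trans; [exact Hy2| apply Rmin_r]).
    apply Rabs_def2 in H. lra.
    eapply Rlt_le_trans; [exact Hy2| apply Rmin_l].
  - subst. destruct (H1 c ltac:(lra) eps Heps) as [d1 [Hd1 Hy1]].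
    destruct (H2 c ltac:(lra) eps Heps) as [d2 [Hd2 Hy2]].
    exists (Rmin d1 d2). split. apply Rmin_pos; lra.
    intros y Hya Hyb. destruct (Rle_dec y c).
    + apply Hy1. lra. eapply Rlt_le_trans; [exact Hyb| apply Rmin_l].
    + apply Hy2. lra. eapply Rlt_le_trans; [exact Hyb| apply Rmin_r].
  - destruct (H2 x ltac:(lra) eps Heps) as [d [Hd Hy]].
    exists (Rmin d (x - c)). split. apply Rmin_pos; lra.
    intros y Hy1 Hy2. apply Hy.
    assert (Rabs (y - x) < x - c) by (eapply Rlt_le_trans; [exact Hy2| apply Rmin_r]).
    apply Rabs_def2 in H. lra.
    eapply Rlt_le_trans; [exact Hy2| apply Rmin_l].
Qed.
Lemma PI_pos' : 0 < PI. Proof. exact PI_RGT_0. Qed.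
Lemma inI0 : inI 0. Proof. unfold inI; pose proof PI_RGT_0; lra. Qed.
Lemma mPI_le_PI : -PI <= PI. Proof. pose proof PI_RGT_0; lra. Qed.

Definition bnd (h : R -> R) := exists B, forall x, inI x -> Rabs (h x) <= B.

Lemma cont_bnd h : cont_on (-PI) PI h -> bnd h.
Proof. intros. apply cont_on_bounded; auto. apply mPI_le_PI. Qed.

Lemma supnorm_ge h x : bnd h -> inI x -> Rabs (h x) <= supnorm h.
Proof.
  intros [B HB] Hx. unfold supnorm. apply Rsup_ge with (M := B).
  intros y [z [Hz ->]]. auto. eauto.
Qed.

Lemma supnorm_le h M : (forall x, inI x -> Rabs (h x) <= M) -> supnorm h <= M.
Proof.
  intros HM. unfold supnorm. apply Rsup_le. exists (Rabs (h 0)), 0. split; auto. apply inI0.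
  intros y [z [Hz ->]]. auto.
Qed.

Lemma supnorm_nonneg h : bnd h -> 0 <= supnorm h.
Proof. intros Hb. eapply Rle_trans; [apply Rabs_pos| apply (supnorm_ge h 0 Hb inI0)]. Qed.

Lemma cont_on_unif a b u (P : nat -> R -> R) : (forall n, cont_on a b (P n)) ->
  (forall eps, 0 < eps -> exists n, forall t, a <= t <= b -> Rabs (u t - P n t) < eps) ->
  cont_on a b u.
Proof.
  intros HP Hu x Hx eps Heps.
  destruct (Hu (eps/3) ltac:(lra)) as [n Hn].
  destruct (HP n x Hx (eps/3) ltac:(lra)) as [d [Hd Hy]].
  exists d; split; auto. intros y Hy1 Hy2.
  specialize (Hy y Hy1 Hy2). pose proof (Hn x Hx). pose proof (Hn y Hy1).
  replace (u y - u x) with ((u y - P n y) + (P n y - P n x) - (u x - P n x)) by ring.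
  unfold Rminus at 1. eapply Rle_lt_trans. apply Rabs_triang.
  rewrite Rabs_Ropp. eapply Rle_lt_trans. apply Rplus_le_compat_r. apply Rabs_triang. lra.
Qed.
Lemma sin_nPI k : sin (INR k * PI) = 0.
Proof.
  induction k. simpl. rewrite Rmult_0_l; apply sin_0.
  rewrite S_INR. replace ((INR k + 1) * PI) with (INR k * PI + PI) by ring.
  rewrite neg_sin, IHk; ring.
Qed.

Lemma cpt_cos_k (k : R) x : continuity_pt (fun t => cos (k * t)) x.
Proof.
  apply (continuity_pt_comp (fun t => k * t) cos).
  apply (continuity_pt_scal id). apply derivable_continuous_pt, derivable_pt_id. apply continuity_cos.
Qed.
Lemma cpt_sin_k (k : R) x : continuity_pt (fun t => sin (k * t)) x.
Proof.
  apply (continuity_pt_comp (fun t => k * t) sin).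
  apply (continuity_pt_scal id). apply derivable_continuous_pt, derivable_pt_id. apply continuity_sin.
Qed.

Lemma trig_sum_cont a b m x : continuity_pt (trig_sum a b m) x.
Proof.
  induction m; simpl.
  - apply continuity_pt_const. intros u v; reflexivity.
  - apply (continuity_pt_plus (fun x => trig_sum a b m x + a (S m) * cos (INR (S m) * x))
       (fun x => b (S m) * sin (INR (S m) * x))).
    apply (continuity_pt_plus (trig_sum a b m) (fun x => a (S m) * cos (INR (S m) * x))); auto.
    apply (continuity_pt_scal (fun x => cos (INR (S m) * x))). apply cpt_cos_k.
    apply (continuity_pt_scal (fun x => sin (INR (S m) * x))). apply cpt_sin_k.
Qed.

Lemma trig_sum_per a b m : trig_sum a b m (-PI) = trig_sum a b m PI.
Proof.
  induction m; simpl; auto. rewrite IHm.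
  replace (match m with | 0%nat => 1 | S _ => INR m + 1 end * - PI) with (- (INR (S m) * PI)) by (rewrite S_INR; destruct m; simpl; ring).
  replace (match m with | 0%nat => 1 | S _ => INR m + 1 end * PI) with (INR (S m) * PI) by (rewrite S_INR; destruct m; simpl; ring).
  rewrite cos_neg, sin_neg, sin_nPI. ring.
Qed.

Lemma rat_trig_C2pi m n r : rat_trig m n r -> C2pi r.
Proof.
  intros [p [q [[ap [bp Hp]] [[aq [bq Hq]] [Hpos ->]]]]]. split.
  - apply cont_on_of_pt. intros x Hx.
    apply (continuity_pt_div p q). 
    + apply cpt_intro. intros eps He. destruct (cpt_elim _ x (trig_sum_cont ap bp m x) eps He) as [d [Hd H]].
      exists d; split; auto. intros y Hy. rewrite !Hp; auto.
    + apply cpt_intro. intros eps He. destruct (cpt_elim _ x (trig_sum_cont aq bq n x) eps He) as [d [Hd H]].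
      exists d; split; auto. intros y Hy. rewrite !Hq; auto.
    + specialize (Hpos x Hx). lra.
  - rewrite Hp, Hq, Hp, Hq, !trig_sum_per. reflexivity.
Qed.
Lemma geom_series K q : 0 <= q < 1 -> is_series (fun k => K * q ^ k) (K / (1 - q)).
Proof.
  intros Hq. assert (H := is_series_geom q ltac:(rewrite Rabs_right; lra)).
  apply (is_series_scal_l K) in H. unfold Rdiv. exact H.
Qed.

Lemma series_bound (c : nat -> R) K q : 0 <= q < 1 -> (forall k, Rabs (c k) <= K * q ^ k) ->
  ex_series c /\ Rabs (Series c) <= K / (1 - q).
Proof.
  intros Hq Hc.
  assert (Hg : ex_series (fun k => K * q ^ k)) by (eexists; apply geom_series; auto).
  assert (Ha : ex_series (fun k => Rabs (c k))).
  { apply (@ex_series_le R_AbsRing R_CompleteNormedModule _ (fun k => K * q ^ k)); auto. intros k. change (Rabs (Rabs (c k)) <= K * q ^ k).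
    rewrite Rabs_Rabsolu; auto. }
  split. apply ex_series_Rabs; auto.
  eapply Rle_trans. apply Series_Rabs; auto.
  rewrite <- (is_series_unique _ _ (geom_series K q Hq)).
  apply Series_le; auto. intros k; split; auto. apply Rabs_pos.
Qed.

Section Part.
Variables (xs : nat -> R) (N : nat).
Hypothesis HP : partition xs N.

Lemma xs_mono i j : (i <= j <= N)%nat -> xs i <= xs j.
Proof.
  destruct HP as [_ [_ [_ Hs]]]. intros [Hij HjN].
  induction j. replace i with 0%nat by lia; lra.
  destruct (Nat.eq_dec i (S j)). subst; lra.
  assert (xs i <= xs j) by (apply IHj; lia). specialize (Hs j ltac:(lia)). lra.
Qed.

Lemma piece_lt i : (1 <= i <= N)%nat -> xs (i - 1)%nat < xs i.
Proof.
  destruct HP as [_ [_ [_ Hs]]]. intros Hi. specialize (Hs (i-1)%nat ltac:(lia)).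
  replace (S (i - 1)) with i in Hs by lia. exact Hs.
Qed.

Lemma Linv_eq i t : (1 <= i <= N)%nat ->
  Linv xs i t = (t - xs (i - 1)%nat) * (2 * PI / (xs i - xs (i - 1)%nat)) - PI.
Proof.
  intros Hi. pose proof (piece_lt i Hi). pose proof PI_RGT_0.
  unfold Linv, Lb, La. field. split; lra.
Qed.

Lemma Linv_left i : (1 <= i <= N)%nat -> Linv xs i (xs (i - 1)%nat) = - PI.
Proof. intros Hi. rewrite Linv_eq; auto. ring. Qed.

Lemma Linv_right i : (1 <= i <= N)%nat -> Linv xs i (xs i) = PI.
Proof. intros Hi. rewrite Linv_eq; auto. pose proof (piece_lt i Hi). field. lra. Qed.

Lemma Linv_in i t : (1 <= i <= N)%nat -> xs (i - 1)%nat <= t <= xs i -> inI (Linv xs i t).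
Proof.
  intros Hi Ht. rewrite Linv_eq; auto. pose proof (piece_lt i Hi). pose proof PI_RGT_0.
  set (D := xs i - xs (i - 1)%nat) in *.
  assert (0 <= 2 * PI / D) by (unfold Rdiv; apply Rmult_le_pos; [lra| left; apply Rinv_0_lt_compat; unfold D; lra]).
  assert (0 <= (t - xs (i - 1)%nat) * (2 * PI / D)) by (apply Rmult_le_pos; lra).
  assert ((t - xs (i - 1)%nat) * (2 * PI / D) <= D * (2 * PI / D)) by (apply Rmult_le_compat_r; unfold D in *; lra).
  replace (D * (2 * PI / D)) with (2 * PI) in H3 by (field; unfold D; lra).
  unfold inI; lra.
Qed.

Lemma Linv_lip i s t : (1 <= i <= N)%nat -> Rabs (Linv xs i s - Linv xs i t) = Rabs (s - t) * (2 * PI / (xs i - xs (i - 1)%nat)).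
Proof.
  intros Hi. rewrite !Linv_eq; auto. pose proof (piece_lt i Hi). pose proof PI_RGT_0.
  replace ((s - xs (i - 1)%nat) * (2 * PI / (xs i - xs (i - 1)%nat)) - PI -
    ((t - xs (i - 1)%nat) * (2 * PI / (xs i - xs (i - 1)%nat)) - PI)) with
    ((s - t) * (2 * PI / (xs i - xs (i - 1)%nat))) by ring.
  rewrite Rabs_mult. f_equal. apply Rabs_right.
  unfold Rdiv; apply Rle_ge, Rmult_le_pos; [lra| left; apply Rinv_0_lt_compat; lra].
Qed.

Lemma Linv_cont i x : (1 <= i <= N)%nat -> continuity_pt (Linv xs i) x.
Proof.
  intros Hi. pose proof (piece_lt i Hi). pose proof PI_RGT_0.
  set (c := 2 * PI / (xs i - xs (i - 1)%nat)).
  assert (0 < c) by (unfold c, Rdiv; apply Rmult_lt_0_compat; [lra| apply Rinv_0_lt_compat; lra]).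
  apply cpt_intro. intros eps He. exists (eps / c). split. unfold Rdiv; apply Rmult_lt_0_compat; auto; apply Rinv_0_lt_compat; auto.
  intros y Hy. rewrite Linv_lip; auto. fold c.
  apply Rmult_lt_compat_r with (r := c) in Hy; auto.
  replace (eps / c * c) with eps in Hy by (field; lra). exact Hy.
Qed.

Lemma piece_exists t : inI t -> exists i, (1 <= i <= N)%nat /\ xs (i - 1)%nat <= t <= xs i.
Proof.
  destruct HP as [H2 [H0 [HN Hs]]]. intros Ht. unfold inI in Ht.
  assert (forall j, (1 <= j <= N)%nat -> t <= xs j -> exists i, (1 <= i <= N)%nat /\ xs (i - 1)%nat <= t <= xs i).
  { induction j; intros Hj Htj. lia.
    destruct (Rle_dec (xs j) t).
    - exists (S j). split; auto. replace (S j - 1)%nat with j by lia. lra.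
    - destruct j. rewrite H0 in n. lra. apply IHj; [lia| lra]. }
  apply (H N); [lia| lra].
Qed.

End Part.
Lemma amax_ge alpha N i : (1 <= i <= N)%nat -> Rabs (alpha i) <= alpha_max alpha N.
Proof.
  induction N; intros Hi. lia. simpl.
  destruct (Nat.eq_dec i (S N)). subst. apply Rmax_r.
  eapply Rle_trans; [apply IHN; lia| apply Rmax_l].
Qed.

Lemma amax_nonneg alpha N : 0 <= alpha_max alpha N.
Proof. induction N; simpl. lra. eapply Rle_trans; [exact IHN| apply Rmax_l]. Qed.

Lemma amax_lt1 alpha N : (forall i, (1 <= i <= N)%nat -> -1 < alpha i < 1) -> alpha_max alpha N < 1.
Proof.
  induction N; intros H; simpl. lra. apply Rmax_lub_lt. apply IHN; intros; apply H; lia.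
  specialize (H (S N) ltac:(lia)). apply Rabs_def1; lra.
Qed.

Fixpoint Aop (xs : nat -> R) (alpha : nat -> R) (k : nat) (h : R -> R) (t : R) : R :=
  match k with
  | O => 0
  | S j => if Rle_dec t (xs j) then Aop xs alpha j h t
           else alpha (S j) * h (Linv xs (S j) t)
  end.

Section Frac.
Variables (xs : nat -> R) (N : nat) (alpha : nat -> R).
Hypothesis HP : partition xs N.

Lemma Aop_stable h i d t : (i + d <= N)%nat -> t <= xs i -> Aop xs alpha (i + d) h t = Aop xs alpha i h t.
Proof.
  induction d; intros Hd Ht. now rewrite Nat.add_0_r.
  replace (i + S d)%nat with (S (i + d)) by lia. simpl.
  destruct (Rle_dec t (xs (i + d)%nat)). apply IHd; auto; lia.
  exfalso. apply n. eapply Rle_trans; [exact Ht| apply (xs_mono xs N HP); lia].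
Qed.

Lemma Aop_i h : h (- PI) = 0 -> h PI = 0 -> forall i, (1 <= i <= N)%nat ->
  forall t, xs (i - 1)%nat <= t <= xs i -> Aop xs alpha i h t = alpha i * h (Linv xs i t).
Proof.
  intros H0 H1. induction i; intros Hi t Ht. lia.
  simpl. replace (S i - 1)%nat with i in Ht by lia.
  destruct (Rle_dec t (xs i)).
  - assert (t = xs i) by lra. subst t.
    replace (xs i) with (xs (S i - 1)%nat) at 2 by (f_equal; lia).
    rewrite (Linv_left xs N HP) by lia. rewrite H0, Rmult_0_r.
    destruct i. reflexivity.
    rewrite IHi by (first [lia | (replace (S i - 1)%nat with i by lia; split; [apply (xs_mono xs N HP); lia| lra])]).
    rewrite (Linv_right xs N HP) by lia. rewrite H1; ring.
  - reflexivity.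
Qed.

Lemma Aop_piece h : h (- PI) = 0 -> h PI = 0 -> forall i, (1 <= i <= N)%nat ->
  forall t, xs (i - 1)%nat <= t <= xs i -> Aop xs alpha N h t = alpha i * h (Linv xs i t).
Proof.
  intros H0 H1 i Hi t Ht. replace N with (i + (N - i))%nat by lia.
  rewrite Aop_stable; [|lia|lra]. apply Aop_i; auto.
Qed.

Lemma Aop_ends h : h (- PI) = 0 -> h PI = 0 -> Aop xs alpha N h (- PI) = 0 /\ Aop xs alpha N h PI = 0.
Proof.
  intros H0 H1. destruct HP as [H2 [Hx0 [HxN _]]]. split.
  - rewrite (Aop_piece h H0 H1 1) by (first [lia | (simpl; split; [lra| rewrite <- Hx0; apply (xs_mono xs N HP); lia])]).
    replace (- PI) with (xs (1 - 1)%nat) by (simpl; auto).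
    rewrite (Linv_left xs N HP) by lia. rewrite H0; ring.
  - rewrite (Aop_piece h H0 H1 N) by (first [lia | (split; [rewrite <- HxN; apply (xs_mono xs N HP); lia| lra])]).
    rewrite <- HxN. rewrite (Linv_right xs N HP) by lia. rewrite H1; ring.
Qed.

Lemma Aop_bound h B : h (- PI) = 0 -> h PI = 0 -> (forall s, inI s -> Rabs (h s) <= B) ->
  forall t, inI t -> Rabs (Aop xs alpha N h t) <= alpha_max alpha N * B.
Proof.
  intros H0 H1 HB t Ht. destruct (piece_exists xs N HP t Ht) as [i [Hi Hti]].
  rewrite (Aop_piece h H0 H1 i Hi t Hti). rewrite Rabs_mult.
  apply Rmult_le_compat; try apply Rabs_pos. apply amax_ge; auto.
  apply HB. apply (Linv_in xs N HP); auto.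
Qed.

Lemma Aop_cont h : h (- PI) = 0 -> h PI = 0 -> cont_on (- PI) PI h -> cont_on (- PI) PI (Aop xs alpha N h).
Proof.
  intros H0 H1 Hc. destruct HP as [H2 [Hx0 [HxN _]]].
  assert (Hpc : forall i, (1 <= i <= N)%nat -> cont_on (xs (i - 1)%nat) (xs i) (Aop xs alpha N h)).
  { intros i Hi. apply cont_on_ext with (g := fun t => alpha i * h (clamp (- PI) PI (Linv xs i t))).
    - apply cont_on_of_pt. intros x _.
      apply (continuity_pt_scal (fun t => h (clamp (- PI) PI (Linv xs i t)))).
      apply (continuity_pt_comp (Linv xs i) (fun y => h (clamp (- PI) PI y))).
      apply (Linv_cont xs N HP); auto. apply cont_on_clamp; auto. apply mPI_le_PI.
    - intros x Hx. rewrite (Aop_piece h H0 H1 i Hi x Hx). rewrite clamp_id; auto.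
      apply (Linv_in xs N HP i x Hi Hx). }
  assert (forall j, (1 <= j <= N)%nat -> cont_on (- PI) (xs j) (Aop xs alpha N h)).
  { induction j; intros Hj. lia. destruct j.
    - rewrite <- Hx0. exact (Hpc 1%nat ltac:(lia)).
    - apply cont_on_glue with (c := xs (S j)). apply IHj; lia.
      replace (S j) with (S (S j) - 1)%nat at 1 by lia. apply Hpc; lia. }
  pose proof (H N ltac:(lia)) as HH; rewrite HxN in HH; exact HH.
Qed.

End Frac.
Fixpoint vseq (xs : nat -> R) (N : nat) (alpha : nat -> R) (w : R -> R) (k : nat) : R -> R :=
  match k with
  | O => Aop xs alpha N w
  | S j => Aop xs alpha N (vseq xs N alpha w j)
  end.

Lemma inI_piece xs N i t : partition xs N -> (1 <= i <= N)%nat -> xs (i - 1)%nat <= t <= xs i -> inI t.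
Proof.
  intros HP Hi Ht. pose proof HP as [_ [Hx0 [HxN _]]].
  pose proof (xs_mono xs N HP 0 (i - 1)%nat ltac:(lia)). pose proof (xs_mono xs N HP i N ltac:(lia)).
  unfold inI; lra.
Qed.

Lemma fractal_exists xs N alpha r b : partition xs N ->
  (forall i, (1 <= i <= N)%nat -> -1 < alpha i < 1) ->
  cont_on (- PI) PI r -> cont_on (- PI) PI b -> r (- PI) = b (- PI) -> r PI = b PI ->
  exists g, is_fractal xs N alpha r b g.
Proof.
  intros HP Hal Hr Hb Hb0 Hb1.
  set (w := fun t => r t - b t).
  set (a := alpha_max alpha N).
  assert (Ha0 : 0 <= a) by apply amax_nonneg.
  assert (Ha1 : a < 1) by (apply amax_lt1; auto).
  assert (Hw : cont_on (- PI) PI w) by (apply cont_on_minus; auto; apply mPI_le_PI).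
  assert (Hw0 : w (- PI) = 0) by (unfold w; lra).
  assert (Hw1 : w PI = 0) by (unfold w; lra).
  destruct (cont_bnd w Hw) as [B HB].
  assert (HB0 : 0 <= B) by (eapply Rle_trans; [apply Rabs_pos| apply (HB 0 inI0)]).
  set (v := vseq xs N alpha w).
  assert (Hve : forall k, v k (- PI) = 0 /\ v k PI = 0).
  { induction k; simpl. apply Aop_ends; auto. apply Aop_ends; tauto. }
  assert (Hvc : forall k, cont_on (- PI) PI (v k)).
  { induction k; simpl. apply Aop_cont; auto. apply Aop_cont; auto; apply Hve. }
  assert (Hvb : forall k t, inI t -> Rabs (v k t) <= (a * B) * a ^ k).
  { induction k; intros t Ht; simpl.
    - rewrite Rmult_1_r. apply (Aop_bound xs N alpha HP w B); auto.
    - replace (a * B * (a * a ^ k)) with (a * (a * B * a ^ k)) by ring.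
      apply (Aop_bound xs N alpha HP); auto; apply Hve. }
  set (u := fun t => Series (fun k => v k t)).
  assert (Hex : forall t, inI t -> ex_series (fun k => v k t)).
  { intros t Ht. apply (series_bound _ (a * B) a); auto. }
  assert (Htail : forall n t, inI t ->
    Rabs (u t - sum_f_R0 (fun k => v k t) n) <= (a * B * a ^ (S n)) / (1 - a)).
  { intros n t Ht. unfold u. rewrite (Series_incr_n _ (S n)); auto; [|lia].
    simpl pred. replace (sum_f_R0 (fun k => v k t) n + Series (fun k => v (S n + k)%nat t) -
      sum_f_R0 (fun k => v k t) n) with (Series (fun k => v (S n + k)%nat t)) by ring.
    apply series_bound. lra. intros k. rewrite Rmult_assoc, <- pow_add. apply Hvb; auto. }
  assert (Hpc : forall n, cont_on (- PI) PI (fun t => sum_f_R0 (fun k => v k t) n)).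
  { induction n; simpl. apply Hvc. apply cont_on_plus; auto. apply mPI_le_PI. }
  assert (Huc : cont_on (- PI) PI u).
  { apply cont_on_unif with (P := fun n t => sum_f_R0 (fun k => v k t) n); auto.
    intros eps Heps.
    set (y := eps * (1 - a) / (a * B + 1)).
    assert (Hy : 0 < y) by (unfold y, Rdiv; apply Rmult_lt_0_compat; [apply Rmult_lt_0_compat; lra| apply Rinv_0_lt_compat; nra]).
    destruct (pow_lt_1_zero a ltac:(rewrite Rabs_right; lra) y Hy) as [n0 Hn0].
    exists n0. intros t Ht. eapply Rle_lt_trans. apply Htail; auto.
    specialize (Hn0 (S n0) ltac:(lia)). rewrite Rabs_right in Hn0 by (apply Rle_ge, pow_le; auto).
    assert (0 <= a ^ S n0) by (apply pow_le; auto).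
    assert (a * B * a ^ S n0 < eps * (1 - a)).
    { assert (E1 : a * B * a ^ S n0 <= (a * B + 1) * a ^ S n0) by nra.
      assert (E2 : (a * B + 1) * a ^ S n0 < (a * B + 1) * y) by (apply Rmult_lt_compat_l; nra).
      replace ((a * B + 1) * y) with (eps * (1 - a)) in E2 by (unfold y; field; nra). lra. }
    apply (Rmult_lt_compat_r (/ (1 - a))) in H0; [| apply Rinv_0_lt_compat; lra].
    unfold Rdiv. replace (eps * (1 - a) * / (1 - a)) with eps in H0 by (field; lra). exact H0. }
  exists (fun t => r t + u t). split.
  - apply cont_on_plus; auto. apply mPI_le_PI.
  - intros i Hi t Ht.
    assert (Hti : inI t) by (apply (inI_piece xs N i t HP Hi Ht)).
    assert (Hs : inI (Linv xs i t)) by (apply (Linv_in xs N HP i t Hi Ht)).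
    assert (u t = alpha i * (w (Linv xs i t) + u (Linv xs i t))).
    { unfold u. rewrite Series_incr_1 by auto.
      simpl v at 1. fold v. unfold v at 1. simpl vseq.
      rewrite (Aop_piece xs N alpha HP w Hw0 Hw1 i Hi t Ht).
      rewrite (Series_ext _ (fun k => alpha i * v k (Linv xs i t))).
      rewrite Series_scal_l. ring.
      intros k. simpl. apply (Aop_piece xs N alpha HP); auto; apply Hve. }
    rewrite H. unfold w. ring.
Qed.
Lemma C2pi_zero : C2pi (fun _ => 0).
Proof. split. apply cont_on_const. reflexivity. Qed.

Lemma trig_zero m x : trig_sum (fun _ => 0) (fun _ => 0) m x = 0.
Proof. induction m; simpl; auto. rewrite IHm; ring. Qed.

Lemma trig_one n x : trig_sum (fun k => match k with O => 1 | _ => 0 end) (fun _ => 0) n x = 1.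
Proof. induction n; simpl; auto. rewrite IHn; ring. Qed.

Lemma rat_trig_nonempty m n : rat_trig m n (fun x => 0 / 1).
Proof.
  exists (fun _ => 0), (fun _ => 1). split; [|split; [|split]].
  - exists (fun _ => 0), (fun _ => 0). intros; now rewrite trig_zero.
  - exists (fun k => match k with O => 1 | _ => 0 end), (fun _ => 0). intros; now rewrite trig_one.
  - intros; lra.
  - reflexivity.
Qed.

Theorem mainTheorem6 (xs : nat -> R) (N : nat) (alpha : nat -> R)
  (L : (R -> R) -> (R -> R)) (f : R -> R) (m n : nat) :
  partition xs N ->
  (forall i, (1 <= i <= N)%nat -> -1 < alpha i < 1) ->
  admissible_L L ->
  C2pi f ->
  E_alpha_mn xs N alpha L m n f <=
    (1 + alpha_max alpha N * (opnorm_IdL L - 1)) / (1 - alpha_max alpha N)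
      * E_mn m n f
    + alpha_max alpha N / (1 - alpha_max alpha N) * opnorm_IdL L * supnorm f.
Proof.
  intros HP Hal HL Hf.
  destruct HL as [Lc [Lext [Llin [[M HM] Lend]]]].
  set (a := alpha_max alpha N).
  assert (Ha0 : 0 <= a) by apply amax_nonneg.
  assert (Ha1 : a < 1) by (apply amax_lt1; auto).
  pose proof mPI_le_PI as Hpp.
  assert (L0 : forall x, inI x -> L (fun _ => 0) x = 0).
  { intros x Hx. pose proof (Llin (fun _ => 0) (fun _ => 0) 1 C2pi_zero C2pi_zero x Hx) as H.
    rewrite (Lext (fun t => 0 + 1 * 0) (fun _ => 0)) in H by (first [intros; ring | auto]). lra. }
  assert (Lscal : forall h c x, C2pi h -> inI x -> L (fun t => c * h t) x = c * L h x).
  { intros h c x Hh Hx. pose proof (Llin (fun _ => 0) h c C2pi_zero Hh x Hx) as H.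
    rewrite (Lext (fun t => 0 + c * h t) (fun t => c * h t)) in H by (first [intros; ring | auto]).
    rewrite H, L0; auto; ring. }
  set (K := opnorm_IdL L).
  set (S := fun y => exists h, C2pi h /\ supnorm h <= 1 /\ y = supnorm (fun t => h t - L h t)).
  assert (Sbnd : forall y, S y -> y <= 1 + Rabs M).
  { intros y [h [Hh [Hh1 ->]]]. apply supnorm_le. intros x Hx.
    assert (bh : bnd h) by (apply cont_bnd, Hh).
    assert (bLh : bnd (L h)) by (apply cont_bnd, Lc, Hh).
    pose proof (supnorm_ge h x bh Hx). pose proof (supnorm_ge (L h) x bLh Hx).
    pose proof (HM h Hh). pose proof (supnorm_nonneg h bh). pose proof (Rle_abs M). pose proof (Rabs_pos M).
    unfold Rminus. eapply Rle_trans. apply Rabs_triang. rewrite Rabs_Ropp.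
    assert (M * supnorm h <= Rabs M) by nra. lra. }
  assert (S0 : S (supnorm (fun t => 0 - L (fun _ => 0) t))).
  { exists (fun _ => 0). split. apply C2pi_zero. split; auto.
    apply supnorm_le. intros; rewrite Rabs_R0; lra. }
  assert (HK0 : 0 <= K).
  { eapply Rle_trans; [| apply (Rsup_ge S _ _ Sbnd S0)].
    apply supnorm_nonneg, cont_bnd, cont_on_minus; auto. apply cont_on_const.
    apply Lc, C2pi_zero. }
  assert (HK : forall r, C2pi r -> supnorm (fun t => r t - L r t) <= K * supnorm r).
  { intros r Hr. assert (br : bnd r) by (apply cont_bnd, Hr).
    pose proof (supnorm_nonneg r br) as Hs0.
    destruct (Req_dec (supnorm r) 0) as [Hs|Hs].
    - rewrite Hs, Rmult_0_r. apply supnorm_le. intros x Hx.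
      pose proof (supnorm_ge r x br Hx). rewrite Hs in H.
      assert (r x = 0) by (pose proof (Rabs_pos (r x)); apply Rabs_eq_0; lra).
      rewrite (Lext r (fun _ => 0)); auto. rewrite L0, H0; auto. rewrite Rminus_0_r, Rabs_R0; lra.
      intros z Hz. pose proof (supnorm_ge r z br Hz). rewrite Hs in H1.
      pose proof (Rabs_pos (r z)); apply Rabs_eq_0; lra.
    - set (s := supnorm r) in *. set (h := fun t => / s * r t).
      assert (Hh : C2pi h) by (split; [apply cont_on_scal; auto; apply Hr| unfold h; rewrite (proj2 Hr); auto]).
      assert (Hh1 : supnorm h <= 1).
      { apply supnorm_le. intros x Hx. unfold h. rewrite Rabs_mult, Rabs_right by (apply Rle_ge; left; apply Rinv_0_lt_compat; lra).
        pose proof (supnorm_ge r x br Hx). fold s in H.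
        apply Rmult_le_compat_l with (r := / s) in H; [| left; apply Rinv_0_lt_compat; lra].
        replace (/ s * s) with 1 in H by (field; lra). exact H. }
      assert (HSy : supnorm (fun t => h t - L h t) <= K) by (apply (Rsup_ge S _ _ Sbnd); exists h; auto).
      apply supnorm_le. intros x Hx.
      assert (bd : bnd (fun t => h t - L h t)) by (apply cont_bnd, cont_on_minus; auto; [apply Hh| apply Lc, Hh]).
      pose proof (supnorm_ge _ x bd Hx) as Hx2. simpl in Hx2.
      assert (E : h x - L h x = / s * (r x - L r x)) by (unfold h; rewrite (Lscal r (/ s) x Hr Hx); ring).
      rewrite E in Hx2.
      rewrite Rabs_mult, Rabs_right in Hx2 by (apply Rle_ge; left; apply Rinv_0_lt_compat; lra).
      apply Rmult_le_compat_l with (r := s) in Hx2; [|lra].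
      replace (s * (/ s * Rabs (r x - L r x))) with (Rabs (r x - L r x)) in Hx2 by (field; lra).
      assert (s * supnorm (fun t => h t - L h t) <= s * K) by (apply Rmult_le_compat_l; lra). lra. }
  set (c := (1 + a * (K - 1)) / (1 - a)).
  set (d := a / (1 - a) * K * supnorm f).
  assert (bf : bnd f) by (apply cont_bnd, Hf).
  assert (Hc : 0 < c).
  { unfold c. apply Rmult_lt_0_compat. nra. apply Rinv_0_lt_compat; lra. }
  assert (Hbound : forall r g, rat_trig m n r -> is_fractal xs N alpha r (L r) g ->
     supnorm (fun t => f t - g t) <= c * supnorm (fun t => f t - r t) + d).
  { intros r g Hr [Hgc Hge].
    assert (Hr2 : C2pi r) by (eapply rat_trig_C2pi; eauto).
    assert (HLr : C2pi (L r)) by (apply Lc; auto).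
    assert (bgr : bnd (fun t => g t - r t)) by (apply cont_bnd, cont_on_minus; auto; apply Hr2).
    assert (bw : bnd (fun t => r t - L r t)) by (apply cont_bnd, cont_on_minus; auto; [apply Hr2| apply HLr]).
    assert (bfr : bnd (fun t => f t - r t)) by (apply cont_bnd, cont_on_minus; auto; [apply Hf| apply Hr2]).
    assert (br : bnd r) by (apply cont_bnd, Hr2).
    set (G := supnorm (fun t => g t - r t)). set (W := supnorm (fun t => r t - L r t)).
    set (D := supnorm (fun t => f t - r t)). set (F := supnorm f).
    assert (HG : G <= a * (G + W)).
    { apply supnorm_le. intros x Hx. destruct (piece_exists xs N HP x Hx) as [i [Hi Hxi]].
      rewrite (Hge i Hi x Hxi).
      set (s := Linv xs i x). assert (Hs : inI s) by (apply (Linv_in xs N HP); auto).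
      replace (r x + alpha i * (g s - L r s) - r x) with (alpha i * ((g s - r s) + (r s - L r s))) by ring.
      rewrite Rabs_mult. apply Rmult_le_compat. apply Rabs_pos. apply Rabs_pos. apply amax_ge; auto.
      eapply Rle_trans. apply Rabs_triang. apply Rplus_le_compat.
      apply (supnorm_ge _ s bgr Hs). apply (supnorm_ge _ s bw Hs). }
    assert (HW : W <= K * supnorm r) by (apply HK; auto).
    assert (Hrs : supnorm r <= F + D).
    { apply supnorm_le. intros x Hx. pose proof (supnorm_ge f x bf Hx). pose proof (supnorm_ge _ x bfr Hx).
      simpl in H0. replace (r x) with (f x - (f x - r x)) by ring. unfold Rminus at 1.
      eapply Rle_trans. apply Rabs_triang. rewrite Rabs_Ropp. fold F D in H, H0. lra. }
    assert (Hfg : supnorm (fun t => f t - g t) <= D + G).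
    { apply supnorm_le. intros x Hx. pose proof (supnorm_ge _ x bfr Hx). pose proof (supnorm_ge _ x bgr Hx).
      simpl in H, H0. replace (f x - g x) with ((f x - r x) + - (g x - r x)) by ring.
      eapply Rle_trans. apply Rabs_triang. rewrite Rabs_Ropp. fold D G in H, H0. lra. }
    assert (HG2 : G * (1 - a) <= a * (K * (F + D))).
    { assert (K * supnorm r <= K * (F + D)) by (apply Rmult_le_compat_l; auto). nra. }
    assert (HG3 : G <= a * (K * (F + D)) / (1 - a)).
    { apply Rmult_le_compat_r with (r := / (1 - a)) in HG2; [| left; apply Rinv_0_lt_compat; lra].
      replace (G * (1 - a) * / (1 - a)) with G in HG2 by (field; lra). exact HG2. }
    replace (c * D + d) with (D + a * (K * (F + D)) / (1 - a)) by (unfold c, d, F; field; lra).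
    lra. }
  set (A := fun y => exists r g, rat_trig m n r /\ is_fractal xs N alpha r (L r) g /\
                   y = supnorm (fun t => f t - g t)).
  set (Bs := fun y => exists r, rat_trig m n r /\ y = supnorm (fun t => f t - r t)).
  assert (HA0 : forall y, A y -> 0 <= y).
  { intros y [r [g [_ [[Hgc _] ->]]]]. apply supnorm_nonneg, cont_bnd, cont_on_minus; auto. apply Hf. }
  assert (Hmain : (Rinf A - d) / c <= Rinf Bs).
  { apply Rinf_ge. exists (supnorm (fun t => f t - 0 / 1)), (fun x => 0 / 1). split; auto. apply rat_trig_nonempty.
    intros y [r [Hr ->]].
    assert (Hr2 : C2pi r) by (eapply rat_trig_C2pi; eauto).
    destruct (fractal_exists xs N alpha r (L r) HP Hal (proj1 Hr2) (proj1 (Lc r Hr2))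
       (eq_sym (proj1 (Lend r Hr2))) (eq_sym (proj2 (Lend r Hr2)))) as [g Hg].
    assert (Rinf A <= supnorm (fun t => f t - g t)) by (apply (Rinf_le A _ 0 HA0); exists r, g; auto).
    pose proof (Hbound r g Hr Hg).
    apply Rmult_le_reg_l with (r := c); auto. unfold Rdiv. replace (c * ((Rinf A - d) * / c)) with (Rinf A - d) by (field; lra).
    lra. }
  change (Rinf A <= c * Rinf Bs + d).
  apply Rmult_le_compat_l with (r := c) in Hmain; [| lra].
  replace (c * ((Rinf A - d) / c)) with (Rinf A - d) in Hmain by (field; lra). lra.
Qed.
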